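(* Let $K$ be a positive definite $n\times n$ matrix and $H$ any $n\times n$ complex matrix. For real exponents $p,s$ define, on positive definite $n\times n$ matrices $A$, \[ \psi_p^s(A)=\bigl(K+H^*A^pH\bigr)^s . \] If $-1\le p\le0$ and $-1\le s\le0$, then $\psi_p^s$ is concave, i.e. $\psi_p^s(\lambda A+(1-\lambda)B)\ge\lambda\psi_p^s(A)+(1-\lambda)\psi_p^s(B)$ in the Loewner order for all positive definite $A,B$ and $\lambda\in[0,1]$.
   Context: Powers of positive definite matrices are defined by functional calculus; the Loewner order is $X\ge Y$ iff $X-Y$ is positive semidefinite. *)

(* Defs.v *)
From HB Require Import structures.
From mathcomp Require Import all_boot all_order all_algebra.
From mathcomp Require Import sesquilinear spectral.
From mathcomp Require Import complex.
From mathcomp Require Import reals exp.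

Set Implicit Arguments.
Unset Strict Implicit.
Unset Printing Implicit Defensive.

Import Order.TTheory GRing.Theory Num.Theory.
Local Open Scope ring_scope.
Local Open Scope complex_scope.
Local Open Scope sesquilinear_scope.

Definition mxadj (R : realType) (m n : nat) (M : 'M[R[i]]_(m, n)) : 'M[R[i]]_(n, m) :=
  M ^t*.

Definition hermitian (R : realType) (n : nat) (M : 'M[R[i]]_n) : Prop :=
  mxadj M = M.

Definition posdef (R : realType) (n : nat) (M : 'M[R[i]]_n) : Prop :=
  hermitian M /\ forall u : 'rV[R[i]]_n, u != 0 -> 0 < (u *m M *m mxadj u) 0 0.

Definition psd (R : realType) (n : nat) (M : 'M[R[i]]_n) : Prop :=
  hermitian M /\ forall u : 'rV[R[i]]_n, 0 <= (u *m M *m mxadj u) 0 0.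

Definition loewner_ge (R : realType) (n : nat) (X Y : 'M[R[i]]_n) : Prop :=
  psd (X - Y).

(* Real power A^p by functional calculus: A = P^-1 diag(d) P with P unitary
   (spectral theorem for normal matrices); A^p := P^-1 diag(d^p) P.
   For positive definite A the d_j are positive reals and d_j^p = powR d_j p. *)
Definition mxpowR (R : realType) (n : nat) (A : 'M[R[i]]_n) (p : R) : 'M[R[i]]_n :=
  invmx (spectralmx A)
  *m diag_mx (\row_j ((powR (complex.Re (spectral_diag A 0 j)) p)%:C))
  *m spectralmx A.

Definition psi (R : realType) (n : nat) (K H : 'M[R[i]]_n) (p s : R)
    (A : 'M[R[i]]_n) : 'M[R[i]]_n :=
  mxpowR (K + mxadj H *m mxpowR A p *m H) s.

(* Main.v *)
Require Import Defs.
From HB Require Import structures.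
From mathcomp Require Import all_boot all_order all_algebra.
From mathcomp Require Import sesquilinear spectral.
From mathcomp Require Import complex.
From mathcomp Require Import reals exp.
From mathcomp Require Import classical_sets boolp functions topology normedtype sequences.
From mathcomp Require Import ring lra.
Set Implicit Arguments.
Unset Strict Implicit.
Unset Printing Implicit Defensive.
Import Order.TTheory GRing.Theory Num.Theory.
Import numFieldNormedType.Exports.
Local Open Scope ring_scope.
Local Open Scope complex_scope.
Local Open Scope sesquilinear_scope.

Section Basic.
Variable R : realType.
Local Notation C := R[i].

Lemma adjK m n (M : 'M[C]_(m, n)) : M ^t* ^t* = M.
Proof. exact: trmxCK. Qed.

Lemma adjM m n p (A : 'M[C]_(m, n)) (B : 'M[C]_(n, p)) :
  (A *m B) ^t* = B ^t* *m A ^t*.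
Proof. by rewrite trmx_mul map_mxM. Qed.

Lemma adjD m n (A B : 'M[C]_(m, n)) : (A + B) ^t* = A ^t* + B ^t*.
Proof. by rewrite linearD /= map_mxD. Qed.

Lemma adjN m n (A : 'M[C]_(m, n)) : (- A) ^t* = - A ^t*.
Proof. by rewrite linearN /= map_mxN. Qed.

Lemma adjB m n (A B : 'M[C]_(m, n)) : (A - B) ^t* = A ^t* - B ^t*.
Proof. by rewrite adjD adjN. Qed.

Lemma conjCR (x : R) : Num.conj_op (x%:C : C) = x%:C.
Proof. exact: conjc_real. Qed.

Lemma adjZ m n (a : R) (A : 'M[C]_(m, n)) : (a%:C *: A) ^t* = a%:C *: A ^t*.
Proof.
by apply/matrixP => i j; rewrite !mxE rmorphM /= conjCR.
Qed.

Lemma adj1 n : (1%:M : 'M[C]_n) ^t* = 1%:M.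
Proof. by rewrite trmx1 map_mx1. Qed.

Lemma adj0 m n : (0 : 'M[C]_(m, n)) ^t* = 0.
Proof. by rewrite trmx0 map_mx0. Qed.

Lemma adj_diag n (d : 'rV[C]_n) : (diag_mx d) ^t* = diag_mx (map_mx Num.conj_op d).
Proof. by rewrite tr_diag_mx map_diag_mx. Qed.

Lemma unitary_r n (U : 'M[C]_n) : U \is unitarymx -> U *m U ^t* = 1%:M.
Proof. by move/unitarymxP. Qed.

Lemma unitary_l n (U : 'M[C]_n) : U \is unitarymx -> U ^t* *m U = 1%:M.
Proof. by move/unitarymxP/mulmx1C. Qed.

Lemma hermP n (A : 'M[C]_n) : Defs.hermitian A -> A ^t* = A.
Proof. by []. Qed.

Definition qf n (M : 'M[C]_n) (u : 'rV[C]_n) : C := (u *m M *m u ^t*) 0 0.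

Lemma qfD n (A B : 'M[C]_n) u : qf (A + B) u = qf A u + qf B u.
Proof. by rewrite /qf mulmxDr mulmxDl mxE. Qed.

Lemma qfN n (A : 'M[C]_n) u : qf (- A) u = - qf A u.
Proof. by rewrite /qf mulmxN mulNmx mxE. Qed.

Lemma qfB n (A B : 'M[C]_n) u : qf (A - B) u = qf A u - qf B u.
Proof. by rewrite qfD qfN. Qed.

Lemma qfZ n (a : C) (A : 'M[C]_n) u : qf (a *: A) u = a * qf A u.
Proof. by rewrite /qf -scalemxAr -scalemxAl mxE. Qed.

Lemma qf_cong k m (N : 'M[C]_(k, m)) (M : 'M[C]_m) u :
  qf (N *m M *m N ^t*) u = qf M (u *m N).
Proof. by rewrite /qf adjM !mulmxA. Qed.

Lemma qf_gram m (v : 'rV[C]_m) : 0 <= (v *m v ^t*) 0 0.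
Proof.
rewrite mxE; apply: sumr_ge0 => j _; rewrite !mxE.
exact: mul_conjC_ge0.
Qed.

Lemma qf_gram_gt0 m (v : 'rV[C]_m) : v != 0 -> 0 < (v *m v ^t*) 0 0.
Proof.
move=> v0; have [j vj] : exists j, v 0 j != 0.
  apply/existsP; apply: contraR v0 => /existsPn H.
  by apply/eqP/matrixP => i j; rewrite ord1 mxE; apply/eqP; have := H j; rewrite negbK.
rewrite mxE (bigD1 j) //= ltr_wpDr //.
  apply: sumr_ge0 => i _; rewrite !mxE; exact: mul_conjC_ge0.
by rewrite !mxE mul_conjC_gt0.
Qed.

Lemma psd_add n (A B : 'M[C]_n) : psd A -> psd B -> psd (A + B).
Proof.
move=> [hA pA] [hB pB]; split; first by rewrite /Defs.hermitian /mxadj adjD (hermP hA) (hermP hB).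
by move=> u; rewrite -/(qf _ _) qfD addr_ge0 //; [apply: pA | apply: pB].
Qed.

Lemma psd_scale n (a : R) (A : 'M[C]_n) : 0 <= a -> psd A -> psd (a%:C *: A).
Proof.
move=> a0 [hA pA]; split; first by rewrite /Defs.hermitian /mxadj adjZ (hermP hA).
by move=> u; rewrite -/(qf _ _) qfZ mulr_ge0 ?ler0c //; apply: pA.
Qed.

Lemma psd0 n : psd (0 : 'M[C]_n).
Proof. by split; [rewrite /Defs.hermitian /mxadj adj0 | move=> u; rewrite mulmx0 mul0mx mxE]. Qed.

Lemma psd_cong k m (N : 'M[C]_(k, m)) (M : 'M[C]_m) : psd M -> psd (N *m M *m N ^t*).
Proof.
move=> [hM pM]; split.
  by rewrite /Defs.hermitian /mxadj !adjM adjK mulmxA (hermP hM).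
by move=> u; rewrite -/(qf _ _) qf_cong; apply: pM.
Qed.

Lemma psd_gram k m (N : 'M[C]_(k, m)) : psd (N *m N ^t*).
Proof.
split; first by rewrite /Defs.hermitian /mxadj adjM adjK.
by move=> u; rewrite mulmxA -(adjK u) -mulmxA -adjM adjK; apply: qf_gram.
Qed.

Lemma posdef_psd n (A : 'M[C]_n) : posdef A -> psd A.
Proof.
move=> [hA pA]; split => // u; have [->|u0] := eqVneq u 0.
  by rewrite !mul0mx mxE.
exact/ltW/pA.
Qed.

Lemma posdef_add_psd n (A B : 'M[C]_n) : posdef A -> psd B -> posdef (A + B).
Proof.
move=> [hA pA] [hB pB]; split; first by rewrite /Defs.hermitian /mxadj adjD (hermP hA) (hermP hB).
by move=> u u0; rewrite -/(qf _ _) qfD ltr_wpDr //; [apply: pB | apply: pA].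
Qed.

Lemma posdef_scale n (a : R) (A : 'M[C]_n) : 0 < a -> posdef A -> posdef (a%:C *: A).
Proof.
move=> a0 [hA pA]; split; first by rewrite /Defs.hermitian /mxadj adjZ (hermP hA).
by move=> u u0; rewrite -/(qf _ _) qfZ mulr_gt0 ?ltcR //; apply: pA.
Qed.

Definition le n (A B : 'M[C]_n) := psd (B - A).

Lemma leL_trans n (A B D : 'M[C]_n) : le A B -> le B D -> le A D.
Proof. by move=> h1 h2; rewrite /le -(subrK B D) -addrA; apply: psd_add. Qed.

Lemma leL_refl n (A : 'M[C]_n) : Defs.hermitian A -> le A A.
Proof. by move=> _; rewrite /le subrr; apply: psd0. Qed.

Lemma le_add n (A B A' B' : 'M[C]_n) : le A B -> le A' B' -> le (A + A') (B + B').
Proof.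
move=> h1 h2; rewrite /le opprD addrACA; exact: psd_add.
Qed.

Lemma le_scale n (a : R) (A B : 'M[C]_n) : 0 <= a -> le A B -> le (a%:C *: A) (a%:C *: B).
Proof. by move=> a0 h; rewrite /le -scalerBr; apply: psd_scale. Qed.

Lemma le_cong k m (N : 'M[C]_(k, m)) (A B : 'M[C]_m) :
  le A B -> le (N *m A *m N ^t*) (N *m B *m N ^t*).
Proof. by move=> h; rewrite /le -mulmxBl -mulmxBr; apply: psd_cong. Qed.

End Basic.

Section Fc.
Variable R : realType.
Local Notation C := R[i].

Definition Fd n (U : 'M[C]_n) (d : 'rV[C]_n) := U ^t* *m diag_mx d *m U.

Definition fc n (f : C -> C) (A : 'M[C]_n) :=
  invmx (spectralmx A) *m diag_mx (\row_j f (spectral_diag A 0 j)) *m spectralmx A.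

Lemma mxpowR_fc n (A : 'M[C]_n) p :
  mxpowR A p = fc (fun z => (powR (complex.Re z) p)%:C) A.
Proof. by []. Qed.

Lemma Fd_normal n (U : 'M[C]_n) d : U \is unitarymx -> Fd U d \is normalmx.
Proof.
move=> Uu; apply/normalmxP; rewrite /Fd !adjM adjK !mulmxA.
rewrite -[U ^t* *m _ *m U *m U ^t*]mulmxA (unitary_r Uu) mulmx1.
rewrite adj_diag -[U ^t* *m diag_mx d *m _]mulmxA diag_mx_comm mulmxA.
by rewrite -[_ *m U *m U ^t*]mulmxA (unitary_r Uu) mulmx1.
Qed.

Lemma fc_uniq n (f : C -> C) (U : 'M[C]_n) d : U \is unitarymx ->
  fc f (Fd U d) = Fd U (\row_j f (d 0 j)).
Proof.
move=> Uu; set A := Fd U d.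
have /orthomx_spectralP hA := Fd_normal d Uu.
rewrite -/A in hA.
set P := spectralmx A in hA *; set e := spectral_diag A in hA *.
have Pu : P \is unitarymx by apply: spectral_unitarymx.
rewrite invmx_unitary // in hA.
rewrite /fc -/P -/e invmx_unitary //.
set W := P *m U ^t*.
have PA : P *m A = diag_mx e *m P.
  by rewrite {1}hA !mulmxA (unitary_r Pu) mul1mx.
have EW : diag_mx e *m W = W *m diag_mx d.
  rewrite /W mulmxA -PA /A /Fd !mulmxA.
  by rewrite -[P *m _ *m _ *m U *m U ^t*]mulmxA (unitary_r Uu) mulmx1.
have PWU : P = W *m U by rewrite /W -mulmxA (unitary_l Uu) mulmx1.
have PtW : P ^t* *m W = U ^t* by rewrite /W mulmxA (unitary_l Pu) mul1mx.
clearbody W.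
have fEW : diag_mx (\row_j f (e 0 j)) *m W = W *m diag_mx (\row_j f (d 0 j)).
  apply/matrixP => i j; rewrite mul_diag_mx mul_mx_diag !mxE.
  have /matrixP /(_ i j) := EW; rewrite mul_diag_mx mul_mx_diag !mxE => h.
  have [->|Wn0] := eqVneq (W i j) 0; first by rewrite mulr0 mul0r.
  suff -> : e 0 i = d 0 j by rewrite mulrC.
  by apply: (mulIf Wn0); rewrite h mulrC.
rewrite {2}PWU mulmxA -[P ^t* *m _ *m W]mulmxA fEW.
by rewrite !mulmxA PtW /Fd.
Qed.

End Fc.

Section Decomp.
Variable R : realType.
Local Notation C := R[i].

Definition cR n (d : 'rV[R]_n) : 'rV[C]_n := \row_j (d 0 j)%:C.
Definition FR n (U : 'M[C]_n) (d : 'rV[R]_n) := Fd U (cR d).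

Lemma nz_entry m (v : 'rV[C]_m) : v != 0 -> exists j, v 0 j != 0.
Proof.
move=> v0; apply/existsP; apply: contraR v0 => /existsPn H.
by apply/eqP/matrixP => i j; rewrite ord1 mxE; apply/eqP; have := H j; rewrite negbK.
Qed.

Lemma qf_Fd n (U : 'M[C]_n) d u : U \is unitarymx ->
  qf (Fd U d) u = \sum_j d 0 j * ((u *m U ^t*) 0 j * ((u *m U ^t*) 0 j)^*).
Proof.
move=> Uu; rewrite /Fd.
have -> : U ^t* *m diag_mx d *m U = U ^t* *m diag_mx d *m (U ^t*) ^t* by rewrite adjK.
rewrite qf_cong /qf mul_mx_diag mxE.
apply: eq_bigr => j _.
set v := u *m U ^t*; clearbody v.
by rewrite !mxE mulrAC mulrC.
Qed.

Lemma herm_FR n (U : 'M[C]_n) (d : 'rV[R]_n) : Defs.hermitian (FR U d).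
Proof.
have e : map_mx Num.conj_op (cR d) = cR d.
  by apply/matrixP => i j; rewrite !mxE; exact: conjCR.
by rewrite /Defs.hermitian /mxadj /FR /Fd !adjM adjK adj_diag e mulmxA.
Qed.

Lemma psd_FR n (U : 'M[C]_n) (d : 'rV[R]_n) : U \is unitarymx -> (forall j, 0 <= d 0 j) ->
  psd (FR U d).
Proof.
move=> Uu d0; split; first exact: herm_FR.
move=> u; rewrite -/(qf _ _) qf_Fd //; apply: sumr_ge0 => j _.
by rewrite mxE mulr_ge0 ?ler0c ?mul_conjC_ge0.
Qed.

Lemma posdef_FR n (U : 'M[C]_n) (d : 'rV[R]_n) : U \is unitarymx -> (forall j, 0 < d 0 j) ->
  posdef (FR U d).
Proof.
move=> Uu d0; split; first exact: herm_FR.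
move=> u u0; rewrite -/(qf _ _) qf_Fd //.
have v0 : u *m U ^t* != 0.
  apply: contra u0 => /eqP h; apply/eqP.
  by rewrite -(mulmx1 u) -(unitary_l Uu) mulmxA h mul0mx.
have [j vj] := nz_entry v0.
rewrite (bigD1 j) //= ltr_wpDr //.
  apply: sumr_ge0 => i _; rewrite mxE mulr_ge0 ?ler0c ?mul_conjC_ge0 //.
  exact: ltW.
by rewrite mxE mulr_gt0 ?ltcR ?mul_conjC_gt0.
Qed.

Lemma delta_diag n (j : 'I_n) (d : 'rV[C]_n) :
  delta_mx (0 : 'I_1) j *m diag_mx d = d 0 j *: delta_mx 0 j.
Proof.
apply/matrixP => a b; rewrite mul_mx_diag !mxE.
by rewrite ord1 eqxx /=; case: eqP => [->|_]; rewrite ?mulr1 ?mul1r ?mulr0 ?mul0r.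
Qed.

Lemma FR_eig n (U : 'M[C]_n) (d : 'rV[R]_n) j : U \is unitarymx ->
  (delta_mx (0 : 'I_1) j *m U) *m FR U d = (d 0 j)%:C *: (delta_mx (0 : 'I_1) j *m U).
Proof.
move=> Uu; rewrite /FR /Fd !mulmxA -[delta_mx 0 j *m U *m U ^t*]mulmxA.
by rewrite (unitary_r Uu) mulmx1 delta_diag mxE -scalemxAl.
Qed.

Lemma qf_FR_eig n (U : 'M[C]_n) (d : 'rV[R]_n) j : U \is unitarymx ->
  qf (FR U d) (delta_mx (0 : 'I_1) j *m U) = (d 0 j)%:C.
Proof.
move=> Uu; rewrite /qf FR_eig // -scalemxAl mxE adjM mulmxA.
rewrite -[delta_mx 0 j *m U *m U ^t*]mulmxA (unitary_r Uu) mulmx1.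
rewrite mxE (bigD1 j) //= big1.
  rewrite !mxE !eqxx /= mul1r addr0 -(rmorph1 (real_complex R)) conjCR. by rewrite rmorph1 mulr1.
move=> k kj; rewrite !mxE /=.
by rewrite (negbTE kj) mul0r.
Qed.

Lemma psd_FR_ge0 n (U : 'M[C]_n) (d : 'rV[R]_n) j : U \is unitarymx -> psd (FR U d) -> 0 <= d 0 j.
Proof.
move=> Uu [_ h]; have := h (delta_mx (0 : 'I_1) j *m U).
by rewrite -/(qf _ _) qf_FR_eig // ler0c.
Qed.

Lemma posdef_FR_gt0 n (U : 'M[C]_n) (d : 'rV[R]_n) j : U \is unitarymx -> posdef (FR U d) -> 0 < d 0 j.
Proof.
move=> Uu [_ h]; have : delta_mx (0:'I_1) j *m U != 0.
  apply/eqP => /(congr1 (mulmx^~ (U ^t*))); rewrite -mulmxA (unitary_r Uu) mulmx1 mul0mx.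
  by move/matrixP/(_ 0 j); rewrite !mxE !eqxx /= => /eqP; rewrite oner_eq0.
move/h; rewrite -/(qf _ _) qf_FR_eig //.
by rewrite ltcR.
Qed.

Lemma herm_decomp n (A : 'M[C]_n) : Defs.hermitian A ->
  exists U, exists d, U \is unitarymx /\ A = FR U d.
Proof.
move=> hA.
have hs : A \is hermsymmx.
  by apply/is_hermitianmxP; rewrite expr0 scale1r; rewrite (hermP hA).
have /orthomx_spectralP eA := hermitian_normalmx hs.
have /mxOverP re := hermitian_spectral_diag_real hs.
have Pu := spectral_unitarymx A.
move: eA re Pu; set P := spectralmx A; set e := spectral_diag A => eA re Pu.
exists P, (\row_j complex.Re (e 0 j)).
split => //.
have ee : e = cR (\row_j complex.Re (e 0 j)).
  by apply/matrixP => i j; rewrite ord1 !mxE RRe_real //; apply: re.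
rewrite /FR /Fd -ee -invmx_unitary //.
Qed.

Lemma posdef_decomp n (A : 'M[C]_n) : posdef A ->
  exists U, exists d, [/\ U \is unitarymx, A = FR U d & forall j, 0 < d 0 j].
Proof.
move=> pA; have [U [d [Uu eA]]] := herm_decomp pA.1.
exists U, d; split => //; subst A => j.
exact: (@posdef_FR_gt0 n U d j Uu pA).
Qed.

Lemma psd_decomp n (A : 'M[C]_n) : psd A ->
  exists U, exists d, [/\ U \is unitarymx, A = FR U d & forall j, 0 <= d 0 j].
Proof.
move=> pA; have [U [d [Uu eA]]] := herm_decomp pA.1.
exists U, d; split => //; subst A => j.
exact: (@psd_FR_ge0 n U d j Uu pA).
Qed.

Lemma powFR n (U : 'M[C]_n) (d : 'rV[R]_n) p : U \is unitarymx ->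
  mxpowR (FR U d) p = FR U (\row_j powR (d 0 j) p).
Proof.
move=> Uu; rewrite mxpowR_fc.
rewrite /FR.
rewrite (fc_uniq (fun z => (powR (complex.Re z) p)%:C) (cR d) Uu).
have -> : \row_j (powR (complex.Re (cR d 0 j)) p)%:C = cR (\row_j powR (d 0 j) p).
  by apply/matrixP => i j; rewrite !mxE.
by [].
Qed.

Lemma FR_mul n (U : 'M[C]_n) (d e : 'rV[R]_n) : U \is unitarymx ->
  FR U d *m FR U e = FR U (\row_j (d 0 j * e 0 j)).
Proof.
move=> Uu; rewrite /FR /Fd.
have h : diag_mx (cR d) *m diag_mx (cR e) = diag_mx (cR (\row_j (d 0 j * e 0 j))).
  apply/matrixP => i j; rewrite mul_diag_mx !mxE.
  by case: eqP => [->|_]; rewrite ?mulr1n ?mulr0n ?mulr0 ?rmorphM.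
rewrite -h !mulmxA.
rewrite -[_ *m U *m U ^t*]mulmxA (unitary_r Uu) mulmx1.
by rewrite -[_ *m diag_mx (cR d) *m _]mulmxA.
Qed.

Lemma FR1 n (U : 'M[C]_n) : U \is unitarymx -> FR U (\row_j 1) = 1%:M.
Proof.
move=> Uu; rewrite /FR /Fd.
have -> : diag_mx (cR (\row_j (1 : R) : 'rV[R]_n)) = 1%:M.
  by apply/matrixP => i j; rewrite !mxE.
by rewrite mulmx1 unitary_l.
Qed.

Lemma FR_scale n (U : 'M[C]_n) (a : R) (d : 'rV[R]_n) :
  a%:C *: FR U d = FR U (\row_j (a * d 0 j)).
Proof.
have h : a%:C *: diag_mx (cR d) = diag_mx (cR (\row_j (a * d 0 j))).
  apply/matrixP => i j; rewrite !mxE.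
  by case: eqP => [->|_]; rewrite ?mulr1n ?mulr0n ?mulr0 ?rmorphM.
by rewrite /FR /Fd scalemxAl scalemxAr h.
Qed.

Lemma FR_inv n (U : 'M[C]_n) (d : 'rV[R]_n) : U \is unitarymx -> (forall j, d 0 j != 0) ->
  FR U d \in unitmx /\ invmx (FR U d) = FR U (\row_j (d 0 j)^-1).
Proof.
move=> Uu d0.
have h : FR U d *m FR U (\row_j (d 0 j)^-1) = 1%:M.
  rewrite FR_mul // -(FR1 Uu); congr FR; apply/matrixP => i j; rewrite !mxE divrr //.
  by rewrite unitfE.
have [u1 _] := mulmx1_unit h; split => //.
by rewrite -[RHS]mul1mx -(mulVmx u1) -mulmxA h mulmx1.
Qed.

Lemma powFR_pos n (U : 'M[C]_n) (d : 'rV[R]_n) p : U \is unitarymx -> (forall j, 0 < d 0 j) ->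
  posdef (mxpowR (FR U d) p).
Proof.
move=> Uu d0; rewrite powFR //; apply: posdef_FR => // j.
by rewrite mxE powR_gt0.
Qed.

End Decomp.

Section Pow.
Variable R : realType.
Local Notation C := R[i].

Lemma FR_ext n (U : 'M[C]_n) (d e : 'rV[R]_n) :
  (forall j, d 0 j = e 0 j) -> FR U d = FR U e.
Proof. by move=> h; have -> : d = e by apply/matrixP => i j; rewrite ord1 h. Qed.

Lemma powM n (A : 'M[C]_n) a b : posdef A ->
  mxpowR A a *m mxpowR A b = mxpowR A (a + b).
Proof.
move=> /posdef_decomp [U [d [Uu -> d0]]].
rewrite !(powFR _ _ Uu) (FR_mul _ _ Uu); apply: FR_ext => j.
by rewrite !mxE powRD // (gt_eqF (d0 j)) implybT.
Qed.

Lemma pow1 n (A : 'M[C]_n) : posdef A -> mxpowR A 1 = A.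
Proof.
move=> /posdef_decomp [U [d [Uu -> d0]]].
rewrite !(powFR _ _ Uu); apply: FR_ext => j.
by rewrite !mxE powRr1 // ltW.
Qed.

Lemma pow0 n (A : 'M[C]_n) : posdef A -> mxpowR A 0 = 1%:M.
Proof.
move=> /posdef_decomp [U [d [Uu -> d0]]].
rewrite !(powFR _ _ Uu) -(FR1 Uu); apply: FR_ext => j.
by rewrite !mxE powRr0.
Qed.

Lemma pow_posdef n (A : 'M[C]_n) a : posdef A -> posdef (mxpowR A a).
Proof. by move=> /posdef_decomp [U [d [Uu -> d0]]]; apply: powFR_pos. Qed.

Lemma pow_herm n (A : 'M[C]_n) a : posdef A -> (mxpowR A a) ^t* = mxpowR A a.
Proof. by move=> /(pow_posdef a) [h _]. Qed.

Lemma pow_pow n (A : 'M[C]_n) a b : posdef A ->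
  mxpowR (mxpowR A a) b = mxpowR A (a * b).
Proof.
move=> /posdef_decomp [U [d [Uu -> d0]]].
rewrite !(powFR _ _ Uu); apply: FR_ext => j.
by rewrite !mxE powRrM.
Qed.

Lemma pow_unit n (A : 'M[C]_n) a : posdef A ->
  mxpowR A a \in unitmx /\ invmx (mxpowR A a) = mxpowR A (- a).
Proof.
move=> /posdef_decomp [U [d [Uu -> d0]]].
rewrite !(powFR _ _ Uu).
have H : forall j, (\row_j powR (d 0 j) a) 0 j != 0.
  by move=> j; rewrite mxE gt_eqF // powR_gt0.
have [u e] := FR_inv Uu H.
split; first exact: u.
rewrite e; apply: FR_ext => j.
by rewrite !mxE powRN.
Qed.

Lemma posdef_unit n (A : 'M[C]_n) : posdef A ->
  A \in unitmx /\ invmx A = mxpowR A (-1).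
Proof. by move=> pA; have := pow_unit 1 pA; rewrite pow1. Qed.

End Pow.

Section Block.
Variable R : realType.
Local Notation C := R[i].

Lemma adj_row m n1 n2 (A : 'M[C]_(m, n1)) (B : 'M[C]_(m, n2)) :
  (row_mx A B) ^t* = col_mx (A ^t*) (B ^t*).
Proof. by rewrite tr_row_mx map_col_mx. Qed.

Lemma adj_col m1 m2 n (A : 'M[C]_(m1, n)) (B : 'M[C]_(m2, n)) :
  (col_mx A B) ^t* = row_mx (A ^t*) (B ^t*).
Proof. by rewrite tr_col_mx map_row_mx. Qed.

Lemma adj_block m1 m2 n1 n2 (A : 'M[C]_(m1, n1)) (X : 'M[C]_(m1, n2))
  (Y : 'M[C]_(m2, n1)) (B : 'M[C]_(m2, n2)) :
  (block_mx A X Y B) ^t* = block_mx (A ^t*) (Y ^t*) (X ^t*) (B ^t*).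
Proof. by rewrite tr_block_mx map_block_mx. Qed.

Lemma qf_block n (A X Y B : 'M[C]_n) u1 u2 :
  qf (block_mx A X Y B) (row_mx u1 u2) =
  qf A u1 + (u1 *m X *m u2 ^t*) 0 0 + (u2 *m Y *m u1 ^t*) 0 0 + qf B u2.
Proof.
rewrite /qf adj_row mul_row_block mul_row_col !mulmxDl !mxE.
by rewrite addrACA addrA.
Qed.

Lemma psd_block_diag n (P Q : 'M[C]_n) : psd P -> psd Q ->
  psd (block_mx P 0 0 Q).
Proof.
move=> [hP pP] [hQ pQ]; split.
  by rewrite /Defs.hermitian /mxadj adj_block !adj0 (hermP hP) (hermP hQ).
move=> u; rewrite -/(qf _ _) -(hsubmxK u) qf_block !mulmx0 !mul0mx !mxE !addr0.
by apply: addr_ge0; [apply: pP | apply: pQ].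
Qed.

Lemma schur n (A X B : 'M[C]_n) : A \in unitmx ->
  psd (block_mx A X X B) -> psd (B - X *m invmx A *m X).
Proof.
move=> Au h.
pose N := row_mx (- (X *m invmx A)) (1%:M : 'M[C]_n).
have := psd_cong N h.
rewrite /N mul_row_block adj_row mul_row_col !mul1mx mulNmx mulmxKV //.
by rewrite addNr mul0mx add0r adj1 mulmx1 mulNmx addrC.
Qed.

Lemma posdef_cong n (M N : 'M[C]_n) : posdef M -> N \in unitmx ->
  posdef (N *m M *m N ^t*).
Proof.
move=> [hM pM] Nu; split.
  by rewrite /Defs.hermitian /mxadj !adjM adjK mulmxA (hermP hM).
move=> u u0; rewrite -/(qf _ _) qf_cong; apply: pM.
apply: contra u0 => /eqP h; apply/eqP.
by rewrite -(mulmxK Nu u) h mul0mx.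
Qed.

Lemma delta_U_neq0 n (U : 'M[C]_n) j : U \is unitarymx ->
  delta_mx (0 : 'I_1) j *m U != 0.
Proof.
move=> Uu; apply/eqP => /(congr1 (mulmx^~ (U ^t*))).
rewrite -mulmxA (unitary_r Uu) mulmx1 mul0mx.
by move/matrixP/(_ 0 j); rewrite !mxE !eqxx /= => /eqP; rewrite oner_eq0.
Qed.

Lemma scaleE m n (a : C) (M : 'M[C]_(m, n)) i j : (a *: M) i j = a * M i j.
Proof. by rewrite mxE. Qed.

Lemma sq_mono n (Y T : 'M[C]_n) : psd Y -> posdef T ->
  le (Y *m Y) (T *m T) -> le Y T.
Proof.
move=> pY pT h.
have hM : Defs.hermitian (T - Y).
  by rewrite /Defs.hermitian /mxadj adjB (hermP pY.1) (hermP pT.1).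
have [U [d [Uu eM]]] := herm_decomp hM.
rewrite /le eM; apply: (psd_FR Uu) => j.
rewrite leNgt; apply/negP => dj.
pose r := delta_mx (0 : 'I_1) j *m U.
have r0 : r != 0 by apply: delta_U_neq0.
have e1 : r *m (T - Y) = (d 0 j)%:C *: r by rewrite eM FR_eig.
have e2 : (T - Y) *m r ^t* = (d 0 j)%:C *: r ^t*.
  by rewrite -(hermP hM) -adjM e1 adjZ.
have := h.2 r; rewrite -/(qf _ _).
have -> : T *m T - Y *m Y = T *m (T - Y) + (T - Y) *m Y.
  by rewrite mulmxBr mulmxBl addrA subrK.
have q1 : r *m (T *m (T - Y)) *m r ^t* = (d 0 j)%:C *: (r *m T *m r ^t*).
  by rewrite mulmxA -(mulmxA _ (T - Y)) e2 scalemxAr.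
have q2 : r *m ((T - Y) *m Y) *m r ^t* = (d 0 j)%:C *: (r *m Y *m r ^t*).
  by rewrite mulmxA e1 -!scalemxAl.
rewrite qfD /qf q1 q2 !scaleE -mulrDr -/(qf T r) -/(qf Y r).
have hT := pT.2 r r0; have hY := pY.2 r; rewrite -/(qf _ _) in hT hY.
have : 0 < qf T r + qf Y r by apply: ltr_wpDr.
move=> hs h0.
have : (d 0 j)%:C < 0 by rewrite ltcR.
move=> dn; have := pmulr_rlt0 (d 0 j)%:C hs.
rewrite dn mulrC => hneg.
by have := lt_le_trans hneg h0; rewrite ltxx.
Qed.

End Block.

Section Gm.
Variable R : realType.
Local Notation C := R[i].
Local Notation h := (2^-1 : R).

Lemma hh : h + h = 1. Proof. lra. Qed.
Lemma hmh : h + - h = 0. Proof. lra. Qed.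
Lemma mhh : - h + h = 0. Proof. lra. Qed.
Lemma mhmh : - h + - h = -1. Proof. lra. Qed.

Definition Gm n (A B : 'M[C]_n) :=
  mxpowR A h *m mxpowR (mxpowR A (- h) *m B *m mxpowR A (- h)) h *m mxpowR A h.

Lemma gm_max n (A B X : 'M[C]_n) : posdef A -> posdef B -> psd X ->
  psd (block_mx A X X B) -> le X (Gm A B).
Proof.
move=> pA pB pX hb.
have [Au iA] := posdef_unit pA.
have := schur Au hb; rewrite iA /Gm; clear iA.
have hS : (mxpowR A h) ^t* = mxpowR A h by apply: pow_herm.
have hSi : (mxpowR A (-h)) ^t* = mxpowR A (-h) by apply: pow_herm.
have SiSi : mxpowR A (-h) *m mxpowR A (-h) = mxpowR A (-1).
  rewrite (powM _ _ pA) mhmh; exact: erefl.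
have SSi : mxpowR A h *m mxpowR A (-h) = 1%:M.
  rewrite (powM _ _ pA) hmh (pow0 pA); exact: erefl.
have SiS : mxpowR A (-h) *m mxpowR A h = 1%:M.
  rewrite (powM _ _ pA) mhh (pow0 pA); exact: erefl.
have [Siu _] := pow_unit (- h) pA.
rewrite -SiSi.
move: hS hSi SiSi SSi SiS Siu.
move: (mxpowR A h) (mxpowR A (-h)) => S Si hS hSi SiSi SSi SiS Siu.
move=> /(psd_cong Si); rewrite hSi mulmxBr mulmxBl.
have -> : Si *m (X *m (Si *m Si) *m X) *m Si = (Si *m X *m Si) *m (Si *m X *m Si).
  by rewrite !mulmxA.
move=> hYC.
have pC : posdef (Si *m B *m Si) by rewrite -{2}hSi; apply: posdef_cong.
have TT : mxpowR (Si *m B *m Si) h *m mxpowR (Si *m B *m Si) h = Si *m B *m Si.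
  rewrite (powM _ _ pC) hh (pow1 pC); exact: erefl.
have pT : posdef (mxpowR (Si *m B *m Si) h) by apply: pow_posdef.
move: TT pT; move: (mxpowR (Si *m B *m Si) h) => T TT pT.
have pY : psd (Si *m X *m Si) by rewrite -{2}hSi; apply: psd_cong.
have : le (Si *m X *m Si) T.
  apply: sq_mono.
  - exact: pY.
  - exact: pT.
  rewrite /le TT; exact: hYC.
move=> /(le_cong S); rewrite hS.
have -> : S *m (Si *m X *m Si) *m S = X.
  by rewrite !mulmxA SSi mul1mx -mulmxA SiS mulmx1.
by [].
Qed.

Lemma gm_block n (A B : 'M[C]_n) : posdef A -> posdef B ->
  psd (block_mx A (Gm A B) (Gm A B) B).
Proof.
move=> pA pB; rewrite /Gm.
have SS : mxpowR A h *m mxpowR A h = A.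
  rewrite (powM _ _ pA) hh (pow1 pA); exact: erefl.
have SSi : mxpowR A h *m mxpowR A (-h) = 1%:M.
  rewrite (powM _ _ pA) hmh (pow0 pA); exact: erefl.
have SiS : mxpowR A (-h) *m mxpowR A h = 1%:M.
  rewrite (powM _ _ pA) mhh (pow0 pA); exact: erefl.
have hS : (mxpowR A h) ^t* = mxpowR A h by apply: pow_herm.
have hSi : (mxpowR A (-h)) ^t* = mxpowR A (-h) by apply: pow_herm.
have [Siu _] := pow_unit (- h) pA.
move: SS SSi SiS hS hSi Siu.
move: (mxpowR A h) (mxpowR A (-h)) => S Si SS SSi SiS hS hSi Siu.
have pC : posdef (Si *m B *m Si) by rewrite -{2}hSi; apply: posdef_cong.
have TT : mxpowR (Si *m B *m Si) h *m mxpowR (Si *m B *m Si) h = Si *m B *m Si.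
  rewrite (powM _ _ pC) hh (pow1 pC); exact: erefl.
have hT : (mxpowR (Si *m B *m Si) h) ^t* = mxpowR (Si *m B *m Si) h by apply: pow_herm.
move: TT hT; move: (mxpowR (Si *m B *m Si) h) => T TT hT.
have := psd_gram (col_mx S (S *m T)).
rewrite adj_col mul_col_row adjM hS hT SS.
have e1 : S *m (T *m S) = S *m T *m S by rewrite mulmxA.
have e2 : S *m T *m (T *m S) = B.
  rewrite mulmxA -(mulmxA S T T) TT !mulmxA SSi mul1mx -mulmxA SiS mulmx1.
  exact: erefl.
by rewrite e1 e2.
Qed.

Lemma gm_posdef n (A B : 'M[C]_n) : posdef A -> posdef B -> posdef (Gm A B).
Proof.
move=> pA pB; rewrite /Gm.
have hS : (mxpowR A h) ^t* = mxpowR A h by apply: pow_herm.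
have [Su _] := pow_unit h pA.
have [Siu _] := pow_unit (- h) pA.
have hSi : (mxpowR A (-h)) ^t* = mxpowR A (-h) by apply: pow_herm.
have pC : posdef (mxpowR A (-h) *m B *m mxpowR A (-h)).
  by rewrite -{2}hSi; apply: posdef_cong.
rewrite -{2}hS; apply: posdef_cong; [exact: pow_posdef | exact: Su].
Qed.

Lemma posdef_comb n (A1 A2 : 'M[C]_n) (l : R) : posdef A1 -> posdef A2 ->
  0 <= l <= 1 -> posdef (l%:C *: A1 + (1 - l)%:C *: A2).
Proof.
move=> p1 p2 /andP [l0 l1].
have [->|ln0] := eqVneq l 0.
  rewrite scale0r add0r subr0 rmorph1 scale1r; exact: p2.
apply: posdef_add_psd.
  by apply: posdef_scale => //; rewrite lt_def ln0.
by apply: psd_scale; [rewrite subr_ge0 | apply: posdef_psd].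
Qed.

Lemma gm_mono n (A A' B B' : 'M[C]_n) : posdef A -> posdef A' -> posdef B -> posdef B' ->
  le A A' -> le B B' -> le (Gm A B) (Gm A' B').
Proof.
move=> pA pA' pB pB' hA hB.
apply: gm_max; [exact: pA' | exact: pB' | exact/posdef_psd/gm_posdef | ].
have -> : block_mx A' (Gm A B) (Gm A B) B' =
    block_mx A (Gm A B) (Gm A B) B + block_mx (A' - A) 0 0 (B' - B).
  by rewrite add_block_mx !addr0 [A + _]addrC [B + _]addrC !subrK.
apply: psd_add; first exact: gm_block.
exact: psd_block_diag.
Qed.

Lemma gm_conc n (A1 A2 B1 B2 : 'M[C]_n) (l : R) :
  posdef A1 -> posdef A2 -> posdef B1 -> posdef B2 -> 0 <= l <= 1 ->
  le (l%:C *: Gm A1 B1 + (1 - l)%:C *: Gm A2 B2)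
     (Gm (l%:C *: A1 + (1 - l)%:C *: A2) (l%:C *: B1 + (1 - l)%:C *: B2)).
Proof.
move=> p1 p2 q1 q2 hl; have /andP [l0 l1] := hl.
have l1' : 0 <= 1 - l by rewrite subr_ge0.
apply: gm_max; [exact: posdef_comb | exact: posdef_comb | | ].
  apply: psd_add; apply: psd_scale => //; exact/posdef_psd/gm_posdef.
have -> : block_mx (l%:C *: A1 + (1 - l)%:C *: A2)
     (l%:C *: Gm A1 B1 + (1 - l)%:C *: Gm A2 B2)
     (l%:C *: Gm A1 B1 + (1 - l)%:C *: Gm A2 B2)
     (l%:C *: B1 + (1 - l)%:C *: B2) =
   l%:C *: block_mx A1 (Gm A1 B1) (Gm A1 B1) B1 +
   (1 - l)%:C *: block_mx A2 (Gm A2 B2) (Gm A2 B2) B2.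
  by rewrite !scale_block_mx add_block_mx.
by apply: psd_add; apply: psd_scale => //; apply: gm_block.
Qed.

Lemma powRE (x p : R) : 0 < x -> powR x p = expR (p * ln x).
Proof. by move=> x0; rewrite /powR gt_eqF. Qed.

Lemma gm_scalar (e f : R) : 0 < e -> 0 < f ->
  powR e h * powR (powR e (- h) * f * powR e (- h)) h * powR e h = powR (e * f) h.
Proof.
move=> e0 f0.
have ef0 : 0 < e * f by apply: mulr_gt0.
have g0 : 0 < powR e (- h) by apply: powR_gt0.
have gf0 : 0 < powR e (- h) * f * powR e (- h) by rewrite !mulr_gt0.
have l3 : ln (powR e (- h)) = - h * ln e by rewrite powRE // expRK.
move: g0 gf0 l3; set a := powR e (- h) => g0 gf0 l3.
have l1 : ln (a * f * a) = ln a + ln f + ln a by rewrite !lnM ?posrE ?mulr_gt0.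
have l2 : ln (e * f) = ln e + ln f by rewrite lnM ?posrE.
rewrite (powRE _ ef0) (powRE _ gf0) (powRE _ e0) l1 l2 l3 -!expRD.
congr expR; lra.
Qed.

Lemma gm_FR n (U : 'M[C]_n) (e f : 'rV[R]_n) : U \is unitarymx ->
  (forall j, 0 < e 0 j) -> (forall j, 0 < f 0 j) ->
  Gm (FR U e) (FR U f) = FR U (\row_j powR (e 0 j * f 0 j) h).
Proof.
move=> Uu e0 f0; rewrite /Gm !(powFR _ _ Uu) !(FR_mul _ _ Uu) (powFR _ _ Uu) !(FR_mul _ _ Uu).
apply: FR_ext => j; rewrite !mxE; exact: gm_scalar.
Qed.

Lemma gm_pow n (A : 'M[C]_n) r : posdef A ->
  Gm A (mxpowR A r) = mxpowR A ((1 + r) * h).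
Proof.
move=> /posdef_decomp [U [d [Uu -> d0]]].
have e1 : forall j, 0 < (\row_j powR (d 0 j) r) 0 j by move=> j; rewrite mxE powR_gt0.
rewrite !(powFR _ _ Uu) (gm_FR Uu d0 e1).
apply: FR_ext => j; rewrite !mxE.
by rewrite -{1}(powRr1 (ltW (d0 j))) -powRD ?(gt_eqF (d0 j)) ?implybT // powRrM.
Qed.

Lemma gm_one n (A : 'M[C]_n) r : posdef A ->
  Gm 1%:M (mxpowR A r) = mxpowR A (r * h).
Proof.
move=> /posdef_decomp [U [d [Uu -> d0]]].
have e1 : forall j, 0 < (\row_j powR (d 0 j) r) 0 j by move=> j; rewrite mxE powR_gt0.
have e0 : forall j, 0 < (\row_j (1 : R) : 'rV[R]_n) 0 j by move=> j; rewrite mxE.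
rewrite -(FR1 Uu) !(powFR _ _ Uu) (gm_FR Uu e0 e1).
by apply: FR_ext => j; rewrite !mxE mul1r powRrM.
Qed.

End Gm.

Section LH.
Variable R : realType.
Local Notation C := R[i].
Local Notation h := (2^-1 : R).

Definition mono (r : R) := forall n (A B : 'M[C]_n), posdef A -> posdef B ->
  le A B -> le (mxpowR A r) (mxpowR B r).
Definition conc (r : R) := forall n (A B : 'M[C]_n) (l : R), posdef A -> posdef B ->
  0 <= l <= 1 ->
  le (l%:C *: mxpowR A r + (1 - l)%:C *: mxpowR B r) (mxpowR (l%:C *: A + (1 - l)%:C *: B) r).

Lemma le_id n (A : 'M[C]_n) : le A A.
Proof. by rewrite /le subrr; apply: psd0. Qed.

Lemma comb_same n (X : 'M[C]_n) (l : R) : l%:C *: X + (1 - l)%:C *: X = X.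
Proof. by rewrite -scalerDl -rmorphD addrC subrK rmorph1 scale1r. Qed.

Lemma posdef1 n : posdef (1%:M : 'M[C]_n).
Proof.
split; first by rewrite /Defs.hermitian /mxadj trmx1 map_mx1.
by move=> u u0; rewrite mulmx1; apply: qf_gram_gt0.
Qed.

Lemma mono0 : mono 0.
Proof. by move=> n A B pA pB _; rewrite (pow0 pA) (pow0 pB); apply: le_id. Qed.

Lemma conc0 : conc 0.
Proof.
move=> n A B l pA pB hl; rewrite (pow0 pA) (pow0 pB) comb_same (pow0 (posdef_comb pA pB hl)).
exact: le_id.
Qed.

Lemma mono1 : mono 1.
Proof. by move=> n A B pA pB hAB; rewrite (pow1 pA) (pow1 pB). Qed.

Lemma conc1 : conc 1.
Proof.
move=> n A B l pA pB hl; rewrite (pow1 pA) (pow1 pB) (pow1 (posdef_comb pA pB hl)).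
exact: le_id.
Qed.

Lemma stepA r : mono r -> conc r -> mono ((1 + r) * h) /\ conc ((1 + r) * h).
Proof.
move=> mr cr; split.
  move=> n A B pA pB hAB; rewrite -(gm_pow r pA) -(gm_pow r pB).
  apply: gm_mono => //; try exact: pow_posdef.
  exact: mr.
move=> n A B l pA pB hl.
have pM := posdef_comb pA pB hl.
rewrite -(gm_pow r pA) -(gm_pow r pB) -(gm_pow r pM).
apply: leL_trans (gm_conc _ _ _ _ hl) _; try exact: pow_posdef; try done.
apply: gm_mono; try exact: pow_posdef; try exact: pM.
- exact: posdef_comb (pow_posdef _ pA) (pow_posdef _ pB) hl.
- exact: le_id.
- exact: cr.
Qed.

Lemma stepB r : mono r -> conc r -> mono (r * h) /\ conc (r * h).
Proof.
move=> mr cr; split.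
  move=> n A B pA pB hAB; rewrite -(gm_one r pA) -(gm_one r pB).
  apply: gm_mono; try exact: pow_posdef; try exact: posdef1.
  - exact: le_id.
  - exact: mr.
move=> n A B l pA pB hl.
have pM := posdef_comb pA pB hl.
rewrite -(gm_one r pA) -(gm_one r pB) -(gm_one r pM).
have := gm_conc (posdef1 n) (posdef1 n) (pow_posdef r pA) (pow_posdef r pB) hl.
rewrite comb_same => h1; apply: leL_trans h1 _.
apply: gm_mono; try exact: pow_posdef; try exact: posdef1.
- exact: posdef_comb (pow_posdef _ pA) (pow_posdef _ pB) hl.
- exact: le_id.
- exact: cr.
Qed.

Lemma dyadic_LH m k : (k <= 2 ^ m)%N ->
  mono (k%:R / (2 ^ m)%:R) /\ conc (k%:R / (2 ^ m)%:R).
Proof.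
elim: m k => [|m IH] k.
  rewrite expn0 => hk; rewrite divr1.
  by case: k hk => [|[|//]] _; [split; [exact: mono0 | exact: conc0] |
                               split; [exact: mono1 | exact: conc1]].
move=> hk.
have p2 : (2 ^ m)%:R != 0 :> R by rewrite pnatr_eq0 expn_eq0.
have [hk'|hk'] := leqP k (2 ^ m).
  have [m1 c1] := IH k hk'.
  have -> : k%:R / (2 ^ m.+1)%:R = k%:R / (2 ^ m)%:R * h :> R.
    by rewrite expnS natrM invfM mulrA mulrAC.
  exact: stepB.
have hk2 : (k - 2 ^ m <= 2 ^ m)%N.
  by rewrite leq_subLR addnn -mul2n -expnS.
have [m1 c1] := IH _ hk2.
have -> : k%:R / (2 ^ m.+1)%:R = (1 + (k - 2 ^ m)%:R / (2 ^ m)%:R) * h :> R.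
  rewrite natrB ?(ltnW hk') // expnS natrM invfM.
  by field; rewrite p2.
exact: stepA.
Qed.

End LH.

Section Cont.
Variable R : realType.

Lemma cont_sum (I : Type) (s : seq I) (F : I -> R -> R) (x : R) :
  (forall i, {for x, continuous (F i)}) ->
  {for x, continuous (fun r => \sum_(i <- s) F i r)}.
Proof.
move=> H; elim: s => [|a s IH].
  have -> : (fun r => \sum_(i <- [::]) F i r) = (fun _ => 0).
    by apply: funext => r; rewrite big_nil.
  exact: cst_continuous.
have -> : (fun r => \sum_(i <- a :: s) F i r) = F a + (fun r => \sum_(i <- s) F i r).
  by apply: funext => r; rewrite big_cons.
exact: continuousD.
Qed.

Lemma cont_powR (w d x : R) : 0 < d -> {for x, continuous (fun r => w * powR d r)}.
Proof.
move=> d0.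
have -> : (fun r => w * powR d r) = (fun _ => w) \* (expR \o (fun r => r * ln d)).
  by apply: funext => r /=; rewrite /powR gt_eqF.
apply: continuousM; first exact: cst_continuous.
apply: continuous_comp; last exact: continuous_expR.
apply: continuousM; last exact: cst_continuous.
exact: cvg_id.
Qed.

Lemma cont_neg_near (f : R -> R) (x : R) : {for x, continuous f} -> f x < 0 ->
  exists2 e : R, 0 < e & forall y, `|x - y| < e -> f y < 0.
Proof.
move=> cf fx.
move: cf => /cvgrPdist_lt /(_ (- f x)).
rewrite oppr_gt0 => /(_ fx) /nbhs_ballP [e /= e0 He].
exists e => // y xy.
have : `|f x - f y| < - f x by apply: He; rewrite -ball_normE /=.
move=> h; have h2 : f y - f x < - f x.
  by apply: le_lt_trans (ler_norm _) _; rewrite distrC.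
lra.
Qed.

Lemma dyadic_near (x e : R) : 0 <= x <= 1 -> 0 < e ->
  exists m, exists k, [/\ (k <= 2 ^ m)%N & `|x - k%:R / (2 ^ m)%:R| < e].
Proof.
move=> /andP [x0 x1] e0.
pose m := Num.bound (e^-1).
have hm : e^-1 < m%:R by apply: archi_boundP; rewrite invr_ge0 ltW.
have p2 : (0 : R) < (2 ^ m)%:R by rewrite ltr0n expn_gt0.
have m2 : (m%:R : R) <= (2 ^ m)%:R by rewrite ler_nat ltnW // ltn_expl.
pose k := Num.truncn (x * (2 ^ m)%:R).
have xp : 0 <= x * (2 ^ m)%:R by rewrite mulr_ge0 // ltW.
have /andP [k1 k2] := truncn_itv xp.
exists m, k; split.
  rewrite -(ler_nat R); apply: le_trans k1 _.
  by rewrite -{2}(mul1r (2 ^ m)%:R) ler_pM2r.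
have ek : e^-1 < (2 ^ m)%:R by apply: lt_le_trans m2.
have h1 : 0 <= x - k%:R / (2 ^ m)%:R.
  by rewrite subr_ge0 ler_pdivrMr.
rewrite ger0_norm //.
have h3 : x < (k.+1)%:R / (2 ^ m)%:R by rewrite ltr_pdivlMr.
have h4 : (k.+1)%:R / (2 ^ m)%:R = k%:R / (2 ^ m)%:R + (2 ^ m)%:R^-1 :> R.
  by rewrite -natr1 mulrDl mul1r.
have h5 : (2 ^ m)%:R^-1 < e.
  by rewrite -[e]invrK ltf_pV2 ?posrE ?invr_gt0.
lra.
Qed.

End Cont.

Section LHall.
Variable R : realType.
Local Notation C := R[i].

Lemma dyadic_closure (phi : R -> R) x : {for x, continuous phi} -> 0 <= x <= 1 ->
  (forall m k, (k <= 2 ^ m)%N -> 0 <= phi (k%:R / (2 ^ m)%:R)) -> 0 <= phi x.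
Proof.
move=> cf hx H; rewrite leNgt; apply/negP => neg.
have [e e0 He] := cont_neg_near cf neg.
have [m [k [hk hd]]] := dyadic_near hx e0.
have := He _ hd; rewrite ltNge H //.
Qed.

Lemma psd_closure n (F : R -> 'M[C]_n) r : 0 <= r <= 1 ->
  (forall t, Defs.hermitian (F t)) ->
  (forall u, exists phi : R -> R, (forall x, {for x, continuous phi}) /\
      forall t, qf (F t) u = (phi t)%:C) ->
  (forall m k, (k <= 2 ^ m)%N -> psd (F (k%:R / (2 ^ m)%:R))) -> psd (F r).
Proof.
move=> hr hF hphi hd; split; first exact: hF.
move=> u; have [phi [cphi ephi]] := hphi u.
rewrite -/(qf _ _) ephi ler0c; apply: dyadic_closure => // m k hk.
have [_ /(_ u)] := hd m k hk; rewrite -/(qf _ _) ephi ler0c //.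
Qed.

Lemma qf_pow_cont n (X : 'M[C]_n) u : posdef X ->
  exists phi : R -> R, (forall x, {for x, continuous phi}) /\
      forall t, qf (mxpowR X t) u = (phi t)%:C.
Proof.
move=> /posdef_decomp [U [d [Uu -> d0]]].
pose v := u *m U ^t*.
exists (fun t => \sum_(j <- index_enum 'I_n) complex.Re (v 0 j * (v 0 j)^*) * powR (d 0 j) t).
split.
  by move=> x; apply: cont_sum => j; apply: cont_powR.
move=> t; rewrite (powFR _ _ Uu) /FR (qf_Fd _ _ Uu) rmorph_sum.
apply: eq_bigr => j _; rewrite !mxE rmorphM /= mulrC; congr (_ * _).
rewrite RRe_real //; apply: ger0_real; exact: mul_conjC_ge0.
Qed.

Lemma herm_B n (X Y : 'M[C]_n) : Defs.hermitian X -> Defs.hermitian Y ->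
  Defs.hermitian (X - Y).
Proof. by move=> hX hY; rewrite /Defs.hermitian /mxadj adjB (hermP hX) (hermP hY). Qed.

Lemma herm_D n (X Y : 'M[C]_n) : Defs.hermitian X -> Defs.hermitian Y ->
  Defs.hermitian (X + Y).
Proof. by move=> hX hY; rewrite /Defs.hermitian /mxadj adjD (hermP hX) (hermP hY). Qed.

Lemma herm_Z n (a : R) (X : 'M[C]_n) : Defs.hermitian X -> Defs.hermitian (a%:C *: X).
Proof. by move=> hX; rewrite /Defs.hermitian /mxadj adjZ (hermP hX). Qed.

Lemma herm_pow n (X : 'M[C]_n) t : posdef X -> Defs.hermitian (mxpowR X t).
Proof. by move=> pX; have [] := pow_posdef t pX. Qed.

Lemma LH_all (r : R) : 0 <= r <= 1 -> mono r /\ conc r.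
Proof.
move=> hr; split.
  move=> n A B pA pB hAB.
  apply: (@psd_closure n (fun t => mxpowR B t - mxpowR A t) r hr).
  - by move=> t; apply: herm_B; apply: herm_pow.
  - move=> u; have [pa [ca ea]] := qf_pow_cont u pA.
    have [pb [cb eb]] := qf_pow_cont u pB.
    exists (pb - pa); split; first by move=> x; apply: continuousB.
    by move=> t; rewrite qfB ea eb rmorphB.
  - move=> m k hk; have [mo _] := (@dyadic_LH R _ _ hk); exact: mo.
move=> n A B l pA pB hl.
have pM := posdef_comb pA pB hl.
apply: (@psd_closure n (fun t => mxpowR (l%:C *: A + (1 - l)%:C *: B) t -
   (l%:C *: mxpowR A t + (1 - l)%:C *: mxpowR B t)) r hr).
- move=> t; apply: herm_B; first exact: herm_pow.
  by apply: herm_D; apply: herm_Z; apply: herm_pow.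
- move=> u; have [pa [ca ea]] := qf_pow_cont u pA.
  have [pb [cb eb]] := qf_pow_cont u pB.
  have [pm [cm em]] := qf_pow_cont u pM.
  exists (pm - ((fun _ => l) \* pa + (fun _ => 1 - l) \* pb)); split.
    move=> x; apply: continuousB => //; apply: continuousD.
      by apply: continuousM => //; apply: cst_continuous.
    by apply: continuousM => //; apply: cst_continuous.
  move=> t; rewrite qfB qfD !qfZ em ea eb.
  have -> : (pm - ((fun=> l) \* pa + (fun=> 1 - l) \* pb)) t =
    pm t - (l * pa t + (1 - l) * pb t) by reflexivity.
  have hC : forall a b c d e : R,
      a%:C - (b%:C * c%:C + d%:C * e%:C) = (a - (b * c + d * e))%:C.
    by move=> a b c d e; rewrite rmorphB rmorphD !rmorphM.
  exact: hC.
- move=> m k hk; have [_ co] := (@dyadic_LH R _ _ hk); exact: co.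
Qed.

End LHall.

Section Inv.
Variable R : realType.
Local Notation C := R[i].
Local Notation h := (2^-1 : R).

Lemma inv_block n (X : 'M[C]_n) : posdef X ->
  psd (block_mx X 1%:M 1%:M (invmx X)).
Proof.
move=> pX.
have SS : mxpowR X h *m mxpowR X h = X.
  rewrite (powM _ _ pX) hh (pow1 pX); exact: erefl.
have SSi : mxpowR X h *m mxpowR X (-h) = 1%:M.
  rewrite (powM _ _ pX) hmh (pow0 pX); exact: erefl.
have SiS : mxpowR X (-h) *m mxpowR X h = 1%:M.
  rewrite (powM _ _ pX) mhh (pow0 pX); exact: erefl.
have SiSi : mxpowR X (-h) *m mxpowR X (-h) = invmx X.
  rewrite (powM _ _ pX) mhmh; have [_ ->] := posdef_unit pX; exact: erefl.
have hS : (mxpowR X h) ^t* = mxpowR X h by apply: pow_herm.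
have hSi : (mxpowR X (-h)) ^t* = mxpowR X (-h) by apply: pow_herm.
move: SS SSi SiS SiSi hS hSi.
move: (mxpowR X h) (mxpowR X (-h)) (invmx X) => S Si Xi SS SSi SiS SiSi hS hSi.
have := psd_gram (col_mx S Si).
by rewrite adj_col mul_col_row hS hSi SS SSi SiS SiSi.
Qed.

Lemma inv_anti n (X Y : 'M[C]_n) : posdef X -> posdef Y -> le X Y ->
  le (invmx Y) (invmx X).
Proof.
move=> pX pY hXY.
have [Yu _] := posdef_unit pY.
have hb : psd (block_mx Y 1%:M 1%:M (invmx X)).
  have -> : block_mx Y 1%:M 1%:M (invmx X) =
      block_mx X 1%:M 1%:M (invmx X) + block_mx (Y - X) 0 0 0.
    by rewrite add_block_mx !addr0 addrC subrK.
  apply: psd_add; first exact: inv_block.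
  by apply: psd_block_diag => //; apply: psd0.
have := schur Yu hb.
by rewrite mulmx1 mul1mx.
Qed.

Lemma inv_conv n (W1 W2 : 'M[C]_n) (l : R) : posdef W1 -> posdef W2 -> 0 <= l <= 1 ->
  le (invmx (l%:C *: W1 + (1 - l)%:C *: W2)) (l%:C *: invmx W1 + (1 - l)%:C *: invmx W2).
Proof.
move=> p1 p2 hl; have /andP [l0 l1] := hl.
have l1' : 0 <= 1 - l by rewrite subr_ge0.
have pW := posdef_comb p1 p2 hl.
have [Wu _] := posdef_unit pW.
have hb : psd (block_mx (l%:C *: W1 + (1 - l)%:C *: W2) 1%:M 1%:M
                        (l%:C *: invmx W1 + (1 - l)%:C *: invmx W2)).
  have -> : block_mx (l%:C *: W1 + (1 - l)%:C *: W2) 1%:M 1%:M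
                        (l%:C *: invmx W1 + (1 - l)%:C *: invmx W2) =
    l%:C *: block_mx W1 1%:M 1%:M (invmx W1) + (1 - l)%:C *: block_mx W2 1%:M 1%:M (invmx W2).
    by rewrite !scale_block_mx add_block_mx !comb_same.
  by apply: psd_add; apply: psd_scale => //; apply: inv_block.
have := schur Wu hb.
by rewrite mulmx1 mul1mx.
Qed.

End Inv.

Section Wood.
Variable R : realType.
Local Notation C := R[i].

Definition Gz n (K H Z : 'M[C]_n) :=
  invmx K - (invmx K *m H ^t*) *m invmx (Z + H *m invmx K *m H ^t*) *m (H *m invmx K).

Lemma inv_uniq n (X Y : 'M[C]_n) : X *m Y = 1%:M -> invmx X = Y.
Proof.
move=> h; have [u1 _] := mulmx1_unit h.
by rewrite -[LHS]mulmx1 -h mulmxA (mulVmx u1) mul1mx.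
Qed.

Lemma woodbury n (K H Z : 'M[C]_n) : posdef K -> posdef Z ->
  invmx (K + H ^t* *m invmx Z *m H) = Gz K H Z.
Proof.
move=> pK pZ.
have [Ku _] := posdef_unit pK.
have [Zu _] := posdef_unit pZ.
have pKi : posdef (invmx K) by have [_ ->] := posdef_unit pK; apply: pow_posdef.
have pW : posdef (Z + H *m invmx K *m H ^t*).
  apply: posdef_add_psd; first exact: pZ.
  exact/psd_cong/posdef_psd.
have [Wu _] := posdef_unit pW.
have KKi : K *m invmx K = 1%:M by apply: mulmxV.
have ZiZ : invmx Z *m Z = 1%:M by apply: mulVmx.
have WWi : (Z + H *m invmx K *m H ^t*) *m invmx (Z + H *m invmx K *m H ^t*) = 1%:M.
  by apply: mulmxV.
apply: inv_uniq; rewrite /Gz.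
move: KKi ZiZ WWi.
move: (invmx (Z + H *m invmx K *m H ^t*)) => Wi.
move: (invmx K) (invmx Z) => Ki Zi KKi ZiZ WWi.
have e1 : (K + H ^t* *m Zi *m H) *m (Ki *m H ^t*) = H ^t* *m Zi *m (Z + H *m Ki *m H ^t*).
  rewrite mulmxDl mulmxDr !mulmxA KKi mul1mx -(mulmxA _ Zi Z) ZiZ mulmx1.
  exact: erefl.
have e3 : (K + H ^t* *m Zi *m H) *m Ki = 1%:M + H ^t* *m Zi *m H *m Ki.
  by rewrite mulmxDl KKi.
have e4 : (K + H ^t* *m Zi *m H) *m (Ki *m H ^t* *m Wi *m (H *m Ki)) =
    H ^t* *m Zi *m H *m Ki.
  rewrite (mulmxA (K + H ^t* *m Zi *m H) (Ki *m H ^t* *m Wi)).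
  rewrite (mulmxA (K + H ^t* *m Zi *m H) (Ki *m H ^t*)) e1.
  by rewrite -(mulmxA _ (Z + H *m Ki *m H ^t*) Wi) WWi mulmx1 !mulmxA.
by rewrite mulmxBr e3 e4 addrK.
Qed.

End Wood.

Section GzS.
Variable R : realType.
Local Notation C := R[i].

Lemma le_negsub n (D X1 X2 : 'M[C]_n) : le X2 X1 -> le (D - X1) (D - X2).
Proof. by rewrite /le => h; rewrite opprB addrC addrA subrK. Qed.

Lemma Ki_herm n (K : 'M[C]_n) : posdef K -> (invmx K) ^t* = invmx K.
Proof. by move=> pK; have [_ ->] := posdef_unit pK; apply: pow_herm. Qed.

Lemma Mk_psd n (K H : 'M[C]_n) : posdef K -> psd (H *m invmx K *m H ^t*).
Proof.
move=> pK; apply/psd_cong/posdef_psd.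
by have [_ ->] := posdef_unit pK; apply: pow_posdef.
Qed.

Lemma Gz_mono n (K H Z1 Z2 : 'M[C]_n) : posdef K -> posdef Z1 -> posdef Z2 ->
  le Z1 Z2 -> le (Gz K H Z1) (Gz K H Z2).
Proof.
move=> pK p1 p2 h12; rewrite /Gz; apply: le_negsub.
have hN : (invmx K *m H ^t*) ^t* = H *m invmx K by rewrite adjM adjK (Ki_herm pK).
have q1 : posdef (Z1 + H *m invmx K *m H ^t*).
  by apply: posdef_add_psd; [exact: p1 | exact: Mk_psd pK].
have q2 : posdef (Z2 + H *m invmx K *m H ^t*).
  by apply: posdef_add_psd; [exact: p2 | exact: Mk_psd pK].
have q3 : le (Z1 + H *m invmx K *m H ^t*) (Z2 + H *m invmx K *m H ^t*).
  by apply: le_add; [exact: h12 | exact: le_id].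
have := le_cong (invmx K *m H ^t*) (inv_anti q1 q2 q3).
by rewrite hN.
Qed.

Lemma Gz_conc n (K H Z1 Z2 : 'M[C]_n) (l : R) : posdef K -> posdef Z1 -> posdef Z2 ->
  0 <= l <= 1 ->
  le (l%:C *: Gz K H Z1 + (1 - l)%:C *: Gz K H Z2) (Gz K H (l%:C *: Z1 + (1 - l)%:C *: Z2)).
Proof.
move=> pK p1 p2 hl; rewrite /Gz.
set N := invmx K *m H ^t*; set M := H *m invmx K *m H ^t*.
have hN : N ^t* = H *m invmx K by rewrite /N adjM adjK (Ki_herm pK).
have pW1 : posdef (Z1 + M) by apply: posdef_add_psd; [exact: p1 | exact: Mk_psd pK].
have pW2 : posdef (Z2 + M) by apply: posdef_add_psd; [exact: p2 | exact: Mk_psd pK].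
have eW : l%:C *: Z1 + (1 - l)%:C *: Z2 + M = l%:C *: (Z1 + M) + (1 - l)%:C *: (Z2 + M).
  by rewrite !scalerDr addrACA comb_same.
have eL : l%:C *: (invmx K - N *m invmx (Z1 + M) *m N ^t*) +
          (1 - l)%:C *: (invmx K - N *m invmx (Z2 + M) *m N ^t*) =
          invmx K - N *m (l%:C *: invmx (Z1 + M) + (1 - l)%:C *: invmx (Z2 + M)) *m N ^t*.
  rewrite !scalerBr addrACA comb_same -opprD; congr (_ - _).
  by rewrite mulmxDr mulmxDl -!scalemxAr -!scalemxAl.
rewrite -hN eL eW; apply: le_negsub; apply: le_cong.
exact: inv_conv.
Qed.

End GzS.

Section Final.
Variable R : realType.
Local Notation C := R[i].

Lemma Phi_posdef n (K H Z : 'M[C]_n) : posdef K -> posdef Z ->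
  posdef (K + H ^t* *m invmx Z *m H).
Proof.
move=> pK pZ; apply: posdef_add_psd; first exact: pK.
have := psd_cong (H ^t*) (M := invmx Z).
rewrite adjK; apply; apply: posdef_psd.
by have [_ ->] := posdef_unit pZ; apply: pow_posdef.
Qed.

Lemma Gz_posdef n (K H Z : 'M[C]_n) : posdef K -> posdef Z -> posdef (Gz K H Z).
Proof.
move=> pK pZ; rewrite -(woodbury H pK pZ).
have pP := Phi_posdef H pK pZ.
by have [_ ->] := posdef_unit pP; apply: pow_posdef.
Qed.

Lemma psi_eq n (K H X : 'M[C]_n) (p s : R) : posdef K -> posdef X ->
  psi K H p s X = mxpowR (Gz K H (mxpowR X (- p))) (- s).
Proof.
move=> pK pX.
have pZ : posdef (mxpowR X (- p)) by apply: pow_posdef.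
have [_ e1] := pow_unit (- p) pX.
rewrite opprK in e1.
rewrite /psi /mxadj -e1 -(woodbury H pK pZ).
have pP := Phi_posdef H pK pZ.
have [_ ->] := posdef_unit pP.
rewrite (pow_pow _ _ pP) mulN1r opprK.
exact: erefl.
Qed.

End Final.

Local Close Scope sesquilinear_scope.

Theorem proposition3p3 (R : realType) (n : nat) (K H : 'M[R[i]]_n) (p s : R) :
  posdef K -> -1 <= p <= 0 -> -1 <= s <= 0 ->
  forall (A B : 'M[R[i]]_n) (lam : R),
    posdef A -> posdef B -> 0 <= lam <= 1 ->
    loewner_ge
      (psi K H p s (lam%:C *: A + (1 - lam)%:C *: B))
      (lam%:C *: psi K H p s A + (1 - lam)%:C *: psi K H p s B).
Proof.
move=> pK hp hs A B l pA pB hl.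
have hq : 0 <= - p <= 1 by apply/andP; split; lra.
have hr : 0 <= - s <= 1 by apply/andP; split; lra.
have pM := posdef_comb pA pB hl.
rewrite (psi_eq H p s pK pA) (psi_eq H p s pK pB) (psi_eq H p s pK pM).
have [mq cq] := LH_all hq.
have [mr cr] := LH_all hr.
have pZA : posdef (mxpowR A (- p)) by apply: pow_posdef.
have pZB : posdef (mxpowR B (- p)) by apply: pow_posdef.
have pZM : posdef (mxpowR (l%:C *: A + (1 - l)%:C *: B) (- p)) by apply: pow_posdef.
move: pZA pZB pZM (cq _ _ _ _ pA pB hl).
move: (mxpowR A (- p)) (mxpowR B (- p)) (mxpowR (l%:C *: A + (1 - l)%:C *: B) (- p)).
move=> ZA ZB ZM pZA pZB pZM hZ.
have pGA := Gz_posdef H pK pZA.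
have pGB := Gz_posdef H pK pZB.
have pGM := Gz_posdef H pK pZM.
have pZc := posdef_comb pZA pZB hl.
have pGc := posdef_comb pGA pGB hl.
have h1 : le (l%:C *: Gz K H ZA + (1 - l)%:C *: Gz K H ZB) (Gz K H ZM).
  apply: leL_trans (Gz_conc H pK pZA pZB hl) _.
  exact: Gz_mono pK pZc pZM hZ.
have h2 := cr _ _ _ _ pGA pGB hl.
have h3 := mr _ _ _ pGc pGM h1.
exact: leL_trans h2 h3.
Qed.
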